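(* Let $N\ge 2$ and let $P_1,\dots,P_N$ be probability densities on a feature space $\mathcal{X}$, and let $\overline{P}=\frac{1}{N}\sum_{i=1}^N P_i$. Let $\mathcal{D}^*$ be the optimal discriminator for the least-squares objective $J_{\mathcal D}=\sum_{i=1}^N \mathbb{E}_{\mathbf f\sim P_i}\big[\sum_{j=1}^N(\mathcal{D}_j(\mathbf f)-\mathbb{1}_{\{i=j\}})^2\big]$ over discriminators $\mathcal D:\mathcal X\to\{v\in\mathbb{R}^N: v_i\ge 0,\ \sum_i v_i=1\}$, namely $\mathcal{D}^*_i(\mathbf f)=P_i(\mathbf f)/\sum_{j=1}^N P_j(\mathbf f)$. Define the domain loss of the feature extractor as $$J^{\mathcal D}_{\mathcal F_s}=\sum_{i=1}^N \mathbb{E}_{\mathbf f\sim P_i}\Big[\sum_{j=1}^N\Big(\mathcal{D}^*_j(\mathbf f)-\frac1N\Big)^2\Big].$$ Then $$J^{\mathcal D}_{\mathcal F_s}=\frac1N\sum_{i=1}^N \chi^2_{\mathrm{Neyman}}(P_i\,\|\,\overline{P}),$$ where $\chi^2_{\mathrm{Neyman}}(P_i\|\overline P)=\int \frac{(P_i(\mathbf f)-\overline P(\mathbf f))^2}{\overline P(\mathbf f)}\,d\mathbf f$.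
   Context: In the paper, $P_i$ is the distribution of shared features $\mathcal F_s(x)$ for inputs $x$ from domain $i$; the paper calls the divergence $\int (P-\overline P)^2/\overline P$ the Neyman $\chi^2$ divergence of $P$ from $\overline P$. *)

(* Defs.v *)
From HB Require Import structures.
From mathcomp Require Import all_boot all_order all_algebra.
From mathcomp Require Import all_classical all_reals all_analysis.
Set Implicit Arguments. Unset Strict Implicit. Unset Printing Implicit Defensive.
Import Order.TTheory GRing.Theory Num.Theory.
Local Open Scope ring_scope.

Section defs.
Context (d : measure_display) (X : measurableType d) (R : realType).

Definition mixture (N : nat) (P : 'I_N -> X -> R) (x : X) : R :=
  N%:R^-1 * \sum_(i < N) P i x.

(* optimal least-squares discriminator D*_i(f) = P_i(f) / sum_j P_j(f)
   (MathComp convention x / 0 = 0 where all densities vanish) *)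
Definition Dstar (N : nat) (P : 'I_N -> X -> R) (i : 'I_N) (x : X) : R :=
  P i x / \sum_(j < N) P j x.

Definition expect_dens (mu : {measure set X -> \bar R}) (p g : X -> R) : \bar R :=
  (\int[mu]_x (p x * g x)%:E)%E.

(* Neyman chi^2 divergence  int (p - q)^2 / q  (with 0/0 = 0) *)
Definition chi2_neyman (mu : {measure set X -> \bar R}) (p q : X -> R) : \bar R :=
  (\int[mu]_x (((p x - q x) ^+ 2) / q x)%:E)%E.

Definition domain_loss (mu : {measure set X -> \bar R}) (N : nat)
    (P : 'I_N -> X -> R) : \bar R :=
  (\sum_(i < N) expect_dens mu (P i)
     (fun x => (\sum_(j < N) (Dstar P j x - N%:R^-1) ^+ 2)%R))%E.

Definition is_density (mu : {measure set X -> \bar R}) (p : X -> R) : Prop :=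
  [/\ measurable_fun setT p, (forall x, 0 <= p x) & (\int[mu]_x (p x)%:E = 1)%E].
End defs.

(* Main.v *)
Require Import Defs.
From HB Require Import structures.
From mathcomp Require Import all_boot all_order all_algebra.
From mathcomp Require Import all_classical all_reals all_analysis.
From mathcomp Require Import measurable_realfun.
From mathcomp Require Import ring lra.
Import Order.TTheory GRing.Theory Num.Theory.
Local Open Scope ring_scope.

Lemma minv_meas (d : measure_display) (X : measurableType d) (R : realType)
  (f : X -> R) : measurable_fun setT f -> (forall x, 0 <= f x) ->
  measurable_fun setT (fun x => (f x)^-1).
Proof.
move=> mf f0.
rewrite (_ : (fun x => (f x)^-1) = (fun x => f x `^ (-1))); last first.
  by apply: funext => x; rewrite powR_inv1.
exact: (measurableT_comp (measurable_realfun.measurable_powR (-1)) mf).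
Qed.

Theorem theorem2 (d : measure_display) (X : measurableType d) (R : realType)
  (mu : {measure set X -> \bar R}) (N : nat) (P : 'I_N -> X -> R) :
  (2 <= N)%N ->
  (forall i, is_density mu (P i)) ->
  domain_loss mu P =
  ((N%:R^-1)%:E * \sum_(i < N) chi2_neyman mu (P i) (mixture P))%E.
Proof.
move=> N2 dens.
have mP i : measurable_fun setT (P i) by case: (dens i).
have P0 i x : 0 <= P i x by case: (dens i).
pose S x := \sum_(j < N) P j x.
have S0 x : 0 <= S x by apply: sumr_ge0 => j _.
have mS : measurable_fun setT S by apply: measurable_sum.
have mSV := @minv_meas _ _ _ _ mS S0.
have mM : measurable_fun setT (mixture P).
  by rewrite /mixture; apply: measurable_realfun.measurable_funM; [exact: measurable_cst | exact: mS].
have M0 x : 0 <= mixture P x by rewrite /mixture mulr_ge0 ?invr_ge0 //; exact: S0.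
have mMV := @minv_meas _ _ _ _ mM M0.
pose g x := \sum_(j < N) (Dstar P j x - N%:R^-1) ^+ 2.
have mg : measurable_fun setT g.
  apply: measurable_sum => j; apply: measurable_realfun.measurable_funX; apply: measurable_realfun.measurable_funB.
    by apply: measurable_realfun.measurable_funM.
  exact: measurable_cst.
have g0 x : 0 <= g x by apply: sumr_ge0 => j _; apply: sqr_ge0.
have NR : N%:R != 0 :> R by rewrite pnatr_eq0 -lt0n (leq_trans _ N2).
rewrite /domain_loss /expect_dens /chi2_neyman.
rewrite -ge0_integral_sum //; first last.
- by move=> i x _; rewrite lee_fin mulr_ge0 //; exact: g0.
- by move=> i; apply/measurable_EFinP; apply: measurable_realfun.measurable_funM => //; exact: mg.
have mh i : measurable_fun setT (fun x => (P i x - mixture P x) ^+ 2 / mixture P x).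
  apply: measurable_realfun.measurable_funM => //.
  apply: measurable_realfun.measurable_funX; exact: measurable_realfun.measurable_funB.
have h0 i x : 0 <= (P i x - mixture P x) ^+ 2 / mixture P x.
  by rewrite mulr_ge0 ?sqr_ge0 ?invr_ge0.
rewrite -ge0_integral_sum //; first last.
- by move=> i x _; rewrite lee_fin.
- by move=> i; apply/measurable_EFinP; exact: mh.
rewrite -ge0_integralZl_EFin //; first last.
- by apply: emeasurable_sum => i; apply/measurable_EFinP; exact: mh.
- by move=> x _; apply: sume_ge0 => i _; rewrite lee_fin.
apply: eq_integral => x _.
rewrite !sumEFin -EFinM; congr (_%:E).
rewrite /mixture /Dstar -/(S x).
have [Sx0|SxN0] := eqVneq (S x) 0.
  have Pj0 j : P j x = 0.
    by move/eqP: Sx0; rewrite psumr_eq0 // => /allP /(_ j (mem_index_enum _)) /eqP.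
  rewrite big1; last by move=> i _; rewrite Pj0 mul0r.
  rewrite mulr_sumr big1 // => i _.
  by rewrite Pj0 Sx0 !(mulr0, invr0).
rewrite -big_distrl /= -/(S x) mulr_sumr mulr_sumr.
apply: eq_bigr => j _.
move: (S x) (P j x) SxN0 => s p hs.
by field; rewrite NR hs.
Qed.
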